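(* Let $n$ be even, $V=V_1\sqcup V_2$ with $|V_1|=|V_2|=n/2$, and $0\le q<p\le 1$. Consider the complete weighted graph on $V$ with $w(u,v)=p$ for distinct $u,v$ in the same block, $w(u,v)=q$ for $u,v$ in different blocks, and $w(v,v)=0$. Let $\mathcal P$ be the set of all cuts $\{A,A^\complement\}$ with $A\subseteq V$, with cost $c(\{A,A^\complement\})=\sum_{u\in A,v\in A^\complement}w(u,v)$, and for $\Psi\in\mathbb R$ let $\mathcal P_\Psi=\{P\in\mathcal P: c(P)\le\Psi\}$. If the agreement parameter satisfies $a\ge2$ and $p<2q$, then for every $\Psi\in\mathbb R$ there exists at most one $\mathcal P_\Psi$-tangle.
   Context: An orientation of a set of cuts chooses one side of every cut in it. An orientation $O$ of $\mathcal P_\Psi$ is a $\mathcal P_\Psi$-tangle if for all (not necessarily distinct) chosen sides $A,B,C\in O$ we have $|A\cap B\cap C|\ge a$, where $a\in\mathbb N$ is the agreement parameter. *)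

(* Defs.v *)
From mathcomp Require Import all_boot all_order all_algebra.
Set Implicit Arguments. Unset Strict Implicit. Unset Printing Implicit Defensive.
Import Order.TTheory GRing.Theory Num.Theory.
Local Open Scope ring_scope.

(* Two-block weights: vertices of T, block V1 and its complement V2 := ~: V1. *)
Definition sbm_weight (R : realFieldType) (T : finType) (V1 : {set T}) (p q : R)
  (u v : T) : R :=
  if u == v then 0 else if (u \in V1) == (v \in V1) then p else q.

Definition cut_cost (R : realFieldType) (T : finType) (w : T -> T -> R)
  (A : {set T}) : R :=
  \sum_(u in A) \sum_(v in ~: A) w u v.

(* An orientation of P_Psi = {cuts {A, ~:A} with cost <= Psi}, given as the set
   O of chosen sides: every chosen side belongs to a cut in P_Psi, every cut in
   P_Psi has at least one chosen side, and no cut has two distinct chosen sides. *)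
Definition is_orientation (R : realFieldType) (T : finType) (w : T -> T -> R)
  (Psi : R) (O : {set {set T}}) : Prop :=
  [/\ forall A, A \in O -> cut_cost w A <= Psi,
      forall A, cut_cost w A <= Psi -> (A \in O) || (~: A \in O)
    & forall A, A \in O -> ~: A \in O -> A = ~: A].

Definition is_tangle (R : realFieldType) (T : finType) (w : T -> T -> R)
  (Psi : R) (a : nat) (O : {set {set T}}) : Prop :=
  is_orientation w Psi O /\
  forall A B C, A \in O -> B \in O -> C \in O -> (a <= #|A :&: B :&: C|)%N.

(* Main.v *)
Require Import Defs.
From mathcomp Require Import all_boot all_order all_algebra.
From mathcomp Require Import ring lra zify.
Import Order.TTheory GRing.Theory Num.Theory.
Local Open Scope ring_scope.

Lemma sum_const_on (R : realFieldType) (I : finType) (S : {set I}) (F : I -> R) c :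
  (forall i, i \in S -> F i = c) -> \sum_(i in S) F i = c * #|S|%:R.
Proof. by move=> h; rewrite (eq_bigr (fun _ => c)) // sumr_const mulr_natr. Qed.

Lemma cost_formula (R : realFieldType) (T : finType) (V1 A : {set T}) (p q : R) :
  cut_cost (sbm_weight V1 p q) A =
  #|A :&: V1|%:R * (p * #|~:A :&: V1|%:R + q * #|~:A :\: V1|%:R)
  + #|A :\: V1|%:R * (q * #|~:A :&: V1|%:R + p * #|~:A :\: V1|%:R).
Proof.
rewrite /cut_cost (big_setID V1).
have neq : forall u v, u \in A -> v \in ~:A -> (u == v) = false.
  by move=> u v uA vA; apply/eqP => e; subst; rewrite inE uA in vA.
have inner : forall u, u \in A -> \sum_(v in ~: A) sbm_weight V1 p q u v =
   (if u \in V1 then p * #|~:A :&: V1|%:R + q * #|~:A :\: V1|%:R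
    else q * #|~:A :&: V1|%:R + p * #|~:A :\: V1|%:R).
  move=> u uA.
  rewrite (big_setID V1).
  rewrite (@sum_const_on _ _ (~:A :&: V1) _ (if u \in V1 then p else q)); last first.
    move=> v /setIP [vA vV]; rewrite /sbm_weight (neq u v uA vA).
    by rewrite vV; case: (u \in V1).
  rewrite (@sum_const_on _ _ (~:A :\: V1) _ (if u \in V1 then q else p)); last first.
    move=> v /setDP [vA vV]; rewrite /sbm_weight (neq u v uA vA).
    by rewrite (negbTE vV); case: (u \in V1).
  by case: (u \in V1).
rewrite (@sum_const_on _ _ (A :&: V1) _ (p * #|~:A :&: V1|%:R + q * #|~:A :\: V1|%:R)); last first.
  by move=> u /setIP [uA uV]; rewrite inner // uV.
rewrite (@sum_const_on _ _ (A :\: V1) _ (q * #|~:A :&: V1|%:R + p * #|~:A :\: V1|%:R)); last first.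
  by move=> u /setDP [uA uV]; rewrite inner // (negbTE uV).
rewrite /=; ring.
Qed.
Arguments cost_formula {R T} V1 A p q.


Lemma tangle_size (R : realFieldType) (T : finType) (w : T -> T -> R) Psi a O A :
  is_tangle w Psi a O -> A \in O -> (a <= #|A|)%N.
Proof. by move=> [_ h] hA; have := h _ _ _ hA hA hA; rewrite !setIid. Qed.
Arguments tangle_size {R T w Psi a O A}.


Lemma tangle_cover (R : realFieldType) (T : finType) (w : T -> T -> R) Psi a O A B C :
  (2 <= a)%N -> is_tangle w Psi a O -> A \in O -> cut_cost w B <= Psi ->
  cut_cost w C <= Psi -> (#|A :&: ~:B :&: ~:C| <= 1)%N -> (B \in O) || (C \in O).
Proof.
move=> ha [[_ hor _] hint] hA hB hC hcard.
case/orP: (hor _ hB) => [->//|nB]. case/orP: (hor _ hC) => [->|nC]; first by rewrite orbT.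
have := hint _ _ _ hA nB nC => h. by have := leq_trans ha (leq_trans h hcard).
Qed.
Arguments tangle_cover {R T w Psi a O A B C}.


Lemma subset_card (T : finType) (D : {set T}) n :
  (n <= #|D|)%N -> exists2 B : {set T}, B \subset D & #|B| = n.
Proof.
elim: n => [|n IH] h; first by exists (set0 : {set T}); rewrite ?sub0set ?cards0.
have [B BD cB] := IH (ltnW h).
have : (0 < #|D :\: B|)%N by rewrite cardsD (setIidPr BD) cB subn_gt0.
case/card_gt0P => v /setDP [vD vB].
exists (v |: B); first by rewrite subUset sub1set vD BD.
by rewrite cardsU1 vB cB.
Qed.
Arguments subset_card {T D n}.

Lemma g_mono (R : realFieldType) (p q m j k : R) :
  0 <= q -> q < p -> p < 2 * q -> 0 <= j -> 2 * j <= k -> k <= m ->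
  j * (p * (m - j) + q * m) <= k * (p * (m - k) + q * m).
Proof.
move=> hq hqp hp2 hj hjk hkm.
rewrite -subr_ge0.
have -> : k * (p * (m - k) + q * m) - j * (p * (m - j) + q * m)
   = (k - j) * ((p + q) * m - p * (k + j)) by ring.
apply: mulr_ge0; first lra.
have h1 : p * k <= p * m by apply: ler_wpM2l; lra.
have h2 : p * (2 * j) <= p * k by apply: ler_wpM2l; lra.
have h3 : 0 <= (2 * q - p) * m by apply: mulr_ge0; lra.
lra.
Qed.

Lemma choice_lemma (R : realFieldType) (p q m x a1 y a2 : R) :
  0 <= q -> q < p -> 0 <= x -> 0 <= a1 -> 0 <= y -> 0 <= a2 ->
  m = x + a1 -> m = y + a2 ->
  let F := x * (p * a1 + q * a2) + y * (q * a1 + p * a2) in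
  (x * (p * (m - x) + q * m) <= F /\ y * (p * (m - y) + q * m) <= F) \/
  (a1 * (p * (m - a1) + q * m) <= F /\ a2 * (p * (m - a2) + q * m) <= F).
Proof.
move=> hq hqp hx ha1 hy ha2 hmx hmy F.
have e1 : m - x = a1 by rewrite hmx; ring.
have e2 : m - y = a2 by rewrite hmy; ring.
have e3 : m - a1 = x by rewrite hmx; ring.
have e4 : m - a2 = y by rewrite hmy; ring.
rewrite e1 e2 e3 e4.
have d1 : F - x * (p * a1 + q * m) = y * (p * a2 + q * a1 - q * x).
  by rewrite /F hmy; ring.
have d2 : F - y * (p * a2 + q * m) = x * (p * a1 + q * a2 - q * y).
  by rewrite /F hmx; ring.
have d3 : F - a1 * (p * x + q * m) = a2 * (p * y + q * x - q * a1).
  by rewrite /F hmy; ring.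
have d4 : F - a2 * (p * y + q * m) = a1 * (p * x + q * y - q * a2).
  by rewrite /F hmx; ring.
have hpq : 0 <= p - q by lra.
have hp0 : 0 <= p by lra.
have s1 : 0 <= (p - q) * a1 + (p - q) * y + q * a2 + q * x.
  have := mulr_ge0 hpq ha1.
  have := mulr_ge0 hpq hy.
  have := mulr_ge0 hq ha2. have := mulr_ge0 hq hx. lra.
have s2 : 0 <= (p - q) * a2 + (p - q) * x + q * a1 + q * y.
  have := mulr_ge0 hpq ha2.
  have := mulr_ge0 hpq hx.
  have := mulr_ge0 hq ha1. have := mulr_ge0 hq hy. lra.
have s3 : 0 <= p * a1 + p * x by have := mulr_ge0 hp0 (addr_ge0 ha1 hx); lra.
have s4 : 0 <= p * a2 + p * y by have := mulr_ge0 hp0 (addr_ge0 ha2 hy); lra.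
case: (lerP 0 (p * a1 + q * a2 - q * y)) => P1;
case: (lerP 0 (p * a2 + q * a1 - q * x)) => P2.
- left; split; rewrite -subr_ge0; [rewrite d1 | rewrite d2]; exact: mulr_ge0.
- right; split; rewrite -subr_ge0; [rewrite d3 | rewrite d4]; apply: mulr_ge0 => //; lra.
- right; split; rewrite -subr_ge0; [rewrite d3 | rewrite d4]; apply: mulr_ge0 => //; lra.
- right; split; rewrite -subr_ge0; [rewrite d3 | rewrite d4]; apply: mulr_ge0 => //; lra.
Qed.
Arguments choice_lemma {R p q m x a1 y a2}.


Lemma cost_block (R : realFieldType) (T : finType) (V1 : {set T}) (p q : R) (D : {set T}) :
  #|V1| = #|~:V1| -> (D \subset V1) || (D \subset ~:V1) ->
  cut_cost (sbm_weight V1 p q) D = #|D|%:R * (p * (#|V1|%:R - #|D|%:R) + q * #|V1|%:R).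
Proof.
move=> hm hD; rewrite cost_formula.
have c1 := cardsID D V1.
have c2 := cardsID D (~:V1).
have E1 : ~:D :&: V1 = V1 :\: D by rewrite setDE setIC.
have E2 : ~:D :\: V1 = ~:V1 :\: D by rewrite !setDE setIC.
rewrite E1 E2.
case/orP: hD => hD.
- have hDV : forall u, u \in D -> u \in V1 := subsetP hD.
  have -> : D :&: V1 = D by apply/setIidPl.
  have -> : D :\: V1 = set0.
    apply/setP => u; rewrite !inE; case uD: (u \in D); last by rewrite andbF.
    by rewrite (hDV u uD).
  have e : V1 :&: D = D by apply/setIidPr.
  rewrite e in c1.
  have -> : ~:V1 :\: D = ~:V1.
    apply/setP => u; rewrite !inE; case uD: (u \in D); last by [].
    by rewrite (hDV u uD).
  have -> : (#|V1 :\: D|%:R : R) = #|V1|%:R - #|D|%:R by rewrite -c1 natrD; ring.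
  rewrite cards0 -hm; ring.
- have hDV : forall u, u \in D -> u \notin V1.
    by move=> u uD; have := subsetP hD u uD; rewrite inE.
  have -> : D :\: V1 = D.
    apply/setP => u; rewrite !inE; case uD: (u \in D); last by rewrite andbF.
    by rewrite (hDV u uD).
  have -> : D :&: V1 = set0.
    apply/setP => u; rewrite !inE; case uD: (u \in D) => //.
    by rewrite (negbTE (hDV u uD)).
  have e : ~:V1 :&: D = D by apply/setIidPr.
  rewrite e in c2.
  have -> : V1 :\: D = V1.
    apply/setP => u; rewrite !inE; case uD: (u \in D) => //.
    by rewrite (negbTE (hDV u uD)).
  have -> : (#|~:V1 :\: D|%:R : R) = #|V1|%:R - #|D|%:R by rewrite hm -c2 natrD; ring.
  rewrite cards0; ring.
Qed.
Arguments cost_block {R T V1} p q {D}.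


Lemma nat_facts (k b c : nat) : (2 <= k)%N -> (b = k %/ 2)%N -> (1 + c = k - b)%N ->
  [/\ (b < k)%N, (c < k)%N, (b * 2 <= k)%N & (c * 2 <= k)%N].
Proof. move=> *; split; lia. Qed.
Arguments nat_facts {k b c}.


Lemma block_le (T : finType) (V1 D : {set T}) :
  #|V1| = #|~:V1| -> (D \subset V1) || (D \subset ~:V1) -> (#|D| <= #|V1|)%N.
Proof.
move=> hm /orP [h|h]; first exact: subset_leq_card.
by rewrite hm; exact: subset_leq_card.
Qed.
Arguments block_le {T V1 D}.


Lemma block_sub (T : finType) (V1 D B : {set T}) :
  B \subset D -> (D \subset V1) || (D \subset ~:V1) -> (B \subset V1) || (B \subset ~:V1).
Proof.
move=> BD /orP [h|h]; apply/orP; [left|right]; exact: subset_trans BD h.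
Qed.
Arguments block_sub {T V1 D B}.


Lemma no_block (R : realFieldType) (T : finType) (V1 : {set T}) (p q : R) a Psi O :
  #|V1| = #|~:V1| -> 0 <= q -> q < p -> p < 2 * q -> (2 <= a)%N ->
  is_tangle (sbm_weight V1 p q) Psi a O ->
  forall k (D : {set T}), #|D| = k -> (D \subset V1) || (D \subset ~:V1) ->
  cut_cost (sbm_weight V1 p q) D <= Psi -> D \notin O.
Proof.
move=> hm hq hqp hp2 ha hO.
elim/ltn_ind => k IH D hk hbl hc; apply/negP => DO.
have hs := tangle_size hO DO.
have hk2 : (2 <= k)%N by rewrite -hk; exact: leq_trans ha hs.
have [B BD cB] := subset_card (leq_trans (leq_div k 2) (eq_leq (esym hk))).
have : (0 < #|D :\: B|)%N.
  rewrite cardsD (setIidPr BD) cB hk subn_gt0; apply: ltn_Pdiv => //; exact: leq_trans _ hk2.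
case/card_gt0P => v vDB.
set C := (D :\: B) :\ v.
have cC : (1 + #|C| = k - #|B|)%N.
  by rewrite /C; have := cardsD1 v (D :\: B); rewrite vDB cardsD (setIidPr BD) hk => ->.
have [lB lC lB2 lC2] := nat_facts hk2 cB cC.
have BC : C \subset D.
  by apply/subsetP => u; rewrite /C !inE => /andP [_ /andP [_ ->]].
have hbB := block_sub BD hbl.
have hbC := block_sub BC hbl.
have hDm := block_le hm hbl.
have gle : forall E : {set T}, E \subset D -> (#|E| * 2 <= k)%N ->
    cut_cost (sbm_weight V1 p q) E <= Psi.
  move=> E ED hE; apply: le_trans hc.
  rewrite (cost_block _ _ hm (block_sub ED hbl)) (cost_block _ _ hm hbl).
  apply: g_mono => //.
  - by rewrite -natrM ler_nat mulnC hk.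
  - by rewrite ler_nat.
have hcB := gle B BD lB2.
have hcC := gle C BC lC2.
have hcov : (#|D :&: ~:B :&: ~:C| <= 1)%N.
  rewrite -(cards1 v); apply: subset_leq_card; apply/subsetP => u.
  rewrite /C !inE => /andP [/andP [uD uB] uC].
  by move: uC; rewrite uB uD /= andbT negbK.
case/orP: (tangle_cover ha hO DO hcB hcC hcov) => [BO|CO].
- by have := IH _ lB B (erefl _) hbB hcB; rewrite BO.
- by have := IH _ lC C (erefl _) hbC hcC; rewrite CO.
Qed.

Lemma key (R : realFieldType) (T : finType) (V1 : {set T}) (p q : R) a Psi O O' A :
  #|V1| = #|~:V1| -> 0 <= q -> q < p -> p < 2 * q -> (2 <= a)%N ->
  is_tangle (sbm_weight V1 p q) Psi a O ->
  is_tangle (sbm_weight V1 p q) Psi a O' ->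
  A \in O -> ~:A \in O' -> False.
Proof.
move=> hm hq hqp hp2 ha hO hO' hA hA'.
have [[c1 _ _] _] := hO.
have hcA := c1 _ hA.
have hmx : (#|V1|%:R : R) = #|A :&: V1|%:R + #|~:A :&: V1|%:R.
  by have := cardsID A V1; rewrite [V1 :&: A]setIC setDE [V1 :&: ~:A]setIC => <-; rewrite natrD.
have hmy : (#|V1|%:R : R) = #|A :\: V1|%:R + #|~:A :\: V1|%:R.
  by have := cardsID A (~:V1); rewrite [~:V1 :&: A]setIC setDE [~:V1 :&: ~:A]setIC -hm => <-; rewrite natrD !setDE.
have eF := cost_formula V1 A p q.
have eF' := cost_formula V1 (~:A) p q.
rewrite setCK in eF'.
have cover : forall E : {set T}, (#|E :&: ~:(E :&: V1) :&: ~:(E :\: V1)| <= 1)%N.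
  move=> E; rewrite (_ : _ :&: _ = set0) ?cards0 //.
  by apply/setP => u; rewrite !inE; case: (u \in E); case: (u \in V1).
have sub1 : forall E : {set T}, (E :&: V1 \subset V1) || (E :&: V1 \subset ~:V1).
  by move=> E; rewrite subsetIr.
have sub2 : forall E : {set T}, (E :\: V1 \subset V1) || (E :\: V1 \subset ~:V1).
  by move=> E; rewrite setDE subsetIr orbT.
have nb := fun Psi0 O0 => @no_block R T V1 p q a Psi0 O0 hm hq hqp hp2 ha.
have := choice_lemma hq hqp (ler0n _ _) (ler0n _ _) (ler0n _ _) (ler0n _ _) hmx hmy.
move=> /= [[h1 h2]|[h1 h2]].
- have hc1 : cut_cost (sbm_weight V1 p q) (A :&: V1) <= Psi.
    by rewrite (cost_block _ _ hm (sub1 A)); apply: le_trans h1 _; rewrite -eF.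
  have hc2 : cut_cost (sbm_weight V1 p q) (A :\: V1) <= Psi.
    by rewrite (cost_block _ _ hm (sub2 A)); apply: le_trans h2 _; rewrite -eF.
  case/orP: (tangle_cover ha hO hA hc1 hc2 (cover A)) => hE.
  + by have := nb _ _ hO _ _ (erefl _) (sub1 A) hc1; rewrite hE.
  + by have := nb _ _ hO _ _ (erefl _) (sub2 A) hc2; rewrite hE.
- have eFF : cut_cost (sbm_weight V1 p q) (~:A) = cut_cost (sbm_weight V1 p q) A.
    by rewrite eF eF'; ring.
  have hcA' : cut_cost (sbm_weight V1 p q) (~:A) <= Psi by rewrite eFF.
  have hc1 : cut_cost (sbm_weight V1 p q) (~:A :&: V1) <= Psi.
    by rewrite (cost_block _ _ hm (sub1 _)); apply: le_trans h1 _; rewrite -eF.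
  have hc2 : cut_cost (sbm_weight V1 p q) (~:A :\: V1) <= Psi.
    by rewrite (cost_block _ _ hm (sub2 _)); apply: le_trans h2 _; rewrite -eF.
  case/orP: (tangle_cover ha hO' hA' hc1 hc2 (cover _)) => hE.
  + by have := nb _ _ hO' _ _ (erefl _) (sub1 _) hc1; rewrite hE.
  + by have := nb _ _ hO' _ _ (erefl _) (sub2 _) hc2; rewrite hE.
Qed.
Arguments key {R T V1 p q a Psi O O' A}.


Theorem theorem3 (R : realFieldType) (T : finType) (V1 : {set T})
  (p q : R) (a : nat) :
  #|V1| = #|~: V1| ->
  0 <= q -> q < p -> p <= 1 ->
  (2 <= a)%N -> p < 2 * q ->
  forall (Psi : R) (O1 O2 : {set {set T}}),
    is_tangle (sbm_weight V1 p q) Psi a O1 ->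
    is_tangle (sbm_weight V1 p q) Psi a O2 ->
    O1 = O2.
Proof.
move=> hm hq hqp _ ha hp2 Psi O1 O2 t1 t2.
have [[c1 or1 _] _] := t1.
have [[c2 or2 _] _] := t2.
apply/setP => A; apply/idP/idP => h.
- case/orP: (or2 _ (c1 _ h)) => // nA.
  by case: (key hm hq hqp hp2 ha t1 t2 h nA).
- case/orP: (or1 _ (c2 _ h)) => // nA.
  by case: (key hm hq hqp hp2 ha t2 t1 h nA).
Qed.
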